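(* Let $X=X(\Delta)$ be a smooth projective toric variety of dimension $n$ with rays $\rho_1,\dots,\rho_{n+r}$, and suppose there is a maximal cone $\sigma_0$ with $\sigma_0(1)=\{\rho_1,\dots,\rho_n\}$ such that $$\rho_{n+j}+\sum_{i=1}^n\mathfrak{b}_{i,j}\rho_i=0\qquad(1\le j\le r)$$ with all $\mathfrak{b}_{i,j}\in\mathbb{Z}_{\ge0}$; call this positive relation $\mathcal{P}_{n+j}$. Let $D=\sum_{i=1}^{n+r}\mathfrak{a}_iD_{\rho_i}$ with $L=\mathcal{O}_X(D)$ globally generated, and let $\beta$ be the minimal $L$-degree of centred primitive relations. Then for all $1\le i_0\le n$, $1\le j_0\le r$, $$\deg_L(\mathcal{P}_{n+j_0})=\mathfrak{a}_{n+j_0}+\sum_{i=1}^n\mathfrak{a}_i\mathfrak{b}_{i,j_0}\ge\mathfrak{b}_{i_0,j_0}\beta.$$ If $L$ is ample and there exists $i_0\in\{1,\dots,n\}$ such that $\rho_{i_0}$ belongs to no centred primitive collection of $L$-degree $\beta$, then for this $i_0$ and all $1\le j_0\le r$ the inequality is strict: $\mathfrak{a}_{n+j_0}+\sum_{i=1}^n\mathfrak{a}_i\mathfrak{b}_{i,j_0}>\mathfrak{b}_{i_0,j_0}\beta$. Likewise, if $L$ is ample and there exists $j_0\in\{1,\dots,r\}$ such that $\rho_{n+j_0}$ belongs to no centred primitive collection of $L$-degree $\beta$, then for this $j_0$ and all $1\le i_0\le n$ the inequality is strict.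
   Context: Rays are identified with primitive generators; $D_\rho$ is the torus-invariant divisor of $\rho$. For $D=\sum a_\rho D_\rho$, $\phi_D$ is the piecewise linear function equal on each maximal cone $\sigma$ to $\langle m_D(\sigma),\cdot\rangle$ with $\langle m_D(\sigma),\rho\rangle=-a_\rho$ for $\rho\in\sigma(1)$; the $L$-degree of a relation $\sum c_\rho\rho=0$ is $-\sum c_\rho\phi_D(\rho)$. A primitive collection is a set of rays not generating a cone of $\Delta$ while every proper subset does; it is centred if its elements sum to $0$, and $\sum_{\rho\in\mathcal{I}}\rho=0$ is then a centred primitive relation, whose $L$-degree is the $L$-degree of the collection. *)

(* Defs.v *)
From HB Require Import structures.
From mathcomp Require Import all_boot all_order all_algebra.
Set Implicit Arguments. Unset Strict Implicit. Unset Printing Implicit Defensive.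
Import Order.TTheory GRing.Theory Num.Theory.
Local Open Scope ring_scope.

Section Toric.
(* N rays in the lattice Z^n; ray i has primitive generator [v i].
   [Sigma] is the set of maximal cones, each given by its set of rays;
   the fan Delta consists of all cones spanned by subsets of maximal cones. *)
Variables (n N : nat) (v : 'I_N -> 'rV[int]_n) (Sigma : {set {set 'I_N}}).

Definition dotz (m x : 'rV[int]_n) : int := \sum_(k < n) m 0 k * x 0 k.

Definition vq (i : 'I_N) : 'rV[rat]_n := map_mx (fun z : int => z%:~R) (v i).

Definition in_cone (S : {set 'I_N}) (x : 'rV[rat]_n) : Prop :=
  exists c : 'I_N -> rat, (forall i, i \in S -> 0 <= c i) /\
                          x = \sum_(i in S) c i *: vq i.

Definition is_cone (S : {set 'I_N}) : bool := [exists s in Sigma, S \subset s].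

Definition smooth_cone (s : {set 'I_N}) : Prop :=
  #|s| = n /\ forall x : 'rV[int]_n, exists c : 'I_N -> int,
                x = \sum_(i in s) c i *: v i.

Definition smooth_complete_fan : Prop :=
  [/\ forall s, s \in Sigma -> smooth_cone s,
      forall s t, s \in Sigma -> t \in Sigma ->
        forall x, in_cone s x -> in_cone t x -> in_cone (s :&: t) x,
      forall x : 'rV[rat]_n, exists2 s, s \in Sigma & in_cone s x &
      forall i : 'I_N, exists2 s, s \in Sigma & i \in s].

(* D = sum_i a i D_i.  m_D(s) is characterized by <m_D(s), v i> = - a i for
   i in s (it exists and is unique in Z^n by smoothness).
   O(D) globally generated  <=>  phi_D convex
                            <=>  <m_D(s), v i> >= - a i for all s, i. *)
Definition globally_generated (a : 'I_N -> int) : Prop :=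
  forall s, s \in Sigma -> exists m : 'rV[int]_n,
    (forall i, i \in s -> dotz m (v i) = - a i) /\
    (forall i, i \notin s -> - a i <= dotz m (v i)).

(* O(D) ample  <=>  phi_D strictly convex *)
Definition ample (a : 'I_N -> int) : Prop :=
  forall s, s \in Sigma -> exists m : 'rV[int]_n,
    (forall i, i \in s -> dotz m (v i) = - a i) /\
    (forall i, i \notin s -> - a i < dotz m (v i)).

Definition projective : Prop := exists a, ample a.

Definition primitive_collection (P : {set 'I_N}) : bool :=
  ~~ is_cone P && [forall Q : {set 'I_N}, (Q \proper P) ==> is_cone Q].

Definition centred (P : {set 'I_N}) : bool := \sum_(i in P) v i == 0.

Definition centred_primitive (P : {set 'I_N}) : bool :=
  primitive_collection P && centred P.

(* value of phi_D at the ray generator v i : on any maximal cone s containing i,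
   phi_D(v i) = <m_D(s), v i> = - a i *)
Definition phiD_ray (a : 'I_N -> int) (i : 'I_N) : int := - a i.

Definition Ldeg_rel (a : 'I_N -> int) (c : 'I_N -> int) : int :=
  - \sum_(i < N) c i * phiD_ray a i.

Definition Ldeg (a : 'I_N -> int) (P : {set 'I_N}) : int :=
  Ldeg_rel a (fun i => (i \in P)%:Z).

End Toric.

(* coefficients of the positive relation P_{n+j}:
   v_{n+j} + sum_{i<n} b i j v_i = 0 *)
Definition posrel_coef (n r : nat) (b : 'I_n -> 'I_r -> nat) (j : 'I_r)
  (k : 'I_(n + r)) : int :=
  match split k with
  | inl i => (b i j)%:Z
  | inr j' => (j' == j)%:Z
  end.

(* Main.v *)
Require Import Defs.
From HB Require Import structures.
From mathcomp Require Import all_boot all_order all_algebra.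
From mathcomp Require Import zify ring lra.
Import Order.TTheory GRing.Theory Num.Theory.
Local Open Scope ring_scope.

Set Implicit Arguments. Unset Strict Implicit. Unset Printing Implicit Defensive.
Section LinAlg.
Variables (n N : nat) (v : 'I_N -> 'rV[int]_n).

Lemma vq_sum (S : {set 'I_N}) (c : 'I_N -> int) :
  map_mx (fun z : int => z%:~R) (\sum_(i in S) c i *: v i) =
  \sum_(i in S) (c i)%:~R *: vq v i :> 'rV[rat]_n.
Proof.
apply/rowP => l; rewrite !mxE !summxE.
rewrite (big_morph (fun z : int => (z%:~R : rat)) (@intrD _) (mulr0z 1)).
by apply: eq_bigr => i _; rewrite !mxE intrM.
Qed.

Lemma smooth_indep (s : {set 'I_N}) : smooth_cone v s ->
  forall c : 'I_N -> rat, \sum_(i in s) c i *: vq v i = 0 ->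
  forall i, i \in s -> c i = 0.
Proof.
move=> [cs span] c Hc i iS.
pose M : 'M[rat]_(#|s|, n) := \matrix_(j, l) vq v (enum_val j) 0 l.
have rowM j : row j M = vq v (enum_val j) by apply/rowP => l; rewrite !mxE.
have sub1 : (1%:M <= M)%MS.
  apply/row_subP => l; apply/submxP.
  have [d Hd] := span (row l 1%:M).
  exists (\row_j (d (enum_val j))%:~R).
  rewrite mulmx_sum_row.
  have -> : row l (1%:M : 'M[rat]_n) = map_mx (fun z : int => z%:~R) (row l 1%:M).
    by apply/rowP => k; rewrite !mxE; case: (l == k).
  rewrite Hd vq_sum (big_enum_val (fun i0 => (d i0)%:~R *: vq v i0)) /=.
  by apply: eq_bigr => j _; rewrite rowM mxE.
have rf : row_free M.
  rewrite /row_free eqn_leq rank_leq_row /=.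
  have := mxrankS sub1; rewrite mxrank1 => h; apply: leq_trans h; by rewrite cs.
have := @row_free_inj _ _ _ _ _ rf (\row_j c (enum_val j)) 0.
rewrite mul0mx mulmx_sum_row.
move/(_ _)/rowP => H.
have := H _ (enum_rank_in iS i); rewrite !mxE enum_rankK_in //.
apply; rewrite -[X in _ = X]Hc (big_enum_val (fun i0 => c i0 *: vq v i0)) /=.
by apply: eq_bigr => j _; rewrite rowM mxE.
Qed.
End LinAlg.

Section Fan.
Variables (n N : nat) (v : 'I_N -> 'rV[int]_n) (Sigma : {set {set 'I_N}}).
Hypothesis Hfan : smooth_complete_fan v Sigma.

Definition relc (c : 'I_N -> int) := \sum_(k < N) c k *: v k = 0.
Definition degc (a c : 'I_N -> int) := \sum_(k < N) c k * a k.
Definition psi (a : 'I_N -> int) (m : 'rV[int]_n) k := a k + dotz m (v k).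

Lemma sum_mkcond_in (s : {set 'I_N}) (c : 'I_N -> int) :
  (forall k, k \notin s -> c k = 0) ->
  \sum_(k < N) c k *: v k = \sum_(k in s) c k *: v k.
Proof.
move=> H; rewrite [RHS]big_mkcond /=; apply: eq_bigr => k _.
by case: ifP => // /negbT /H ->; rewrite scale0r.
Qed.

Lemma indep_int (s : {set 'I_N}) (c : 'I_N -> int) : s \in Sigma ->
  relc c -> (forall k, k \notin s -> c k = 0) -> forall k, c k = 0.
Proof.
move=> sS Hc Hs k; case: (boolP (k \in s)) => ks; last exact: Hs.
have [Hsm _ _ _] := Hfan.
have H0 : \sum_(i in s) (fun k => (c k)%:~R) i *: vq v i = 0 :> 'rV[rat]_n.
  rewrite -vq_sum -(sum_mkcond_in Hs) Hc.
  by apply/rowP => l; rewrite !mxE.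
have := smooth_indep (Hsm s sS) H0 ks.
by move/eqP; rewrite intr_eq0 => /eqP.
Qed.

Lemma cone_int (s : {set 'I_N}) (x : 'rV[int]_n) : s \in Sigma ->
  in_cone v s (map_mx (fun z : int => z%:~R) x) ->
  exists c : 'I_N -> int, [/\ forall k, 0 <= c k,
     forall k, k \notin s -> c k = 0 & x = \sum_(k < N) c k *: v k].
Proof.
move=> sS [cr [cr0 Hcr]].
have [Hsm _ _ _] := Hfan.
have [_ span] := Hsm s sS.
have [c0 Hc0] := span x.
have Heq : forall k, k \in s -> (c0 k)%:~R = cr k.
  move=> k ks; apply/eqP; rewrite -subr_eq0; apply/eqP.
  apply: (smooth_indep (Hsm s sS) (c := fun k => (c0 k)%:~R - cr k)) => //.
  rewrite (eq_bigr (fun k => (c0 k)%:~R *: vq v k - cr k *: vq v k));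
    last by move=> i _; rewrite scalerBl.
  by rewrite sumrB -vq_sum -Hc0 Hcr subrr.
exists (fun k => if k \in s then c0 k else 0); split.
- move=> k; case: ifP => // ks.
  by rewrite -(ler0z rat) Heq // cr0.
- by move=> k /negbTE ->.
- rewrite (@sum_mkcond_in s); last by move=> k /negbTE ->.
  by rewrite Hc0; apply: eq_bigr => k ->.
Qed.

Lemma complete_int (x : 'rV[int]_n) : exists s, exists c : 'I_N -> int,
  [/\ s \in Sigma, forall k, 0 <= c k,
     forall k, k \notin s -> c k = 0 & x = \sum_(k < N) c k *: v k].
Proof.
have [_ _ Hc _] := Hfan.
have [s sS Hs] := Hc (map_mx (fun z : int => z%:~R) x).
have [c [H1 H2 H3]] := cone_int sS Hs.
by exists s, c.
Qed.

Lemma dotz_sum (m : 'rV[int]_n) (c : 'I_N -> int) :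
  dotz m (\sum_(k < N) c k *: v k) = \sum_(k < N) c k * dotz m (v k).
Proof.
rewrite /dotz.
under eq_bigr => l _ do rewrite summxE big_distrr /=.
rewrite exchange_big /=; apply: eq_bigr => k _.
rewrite big_distrr /=; apply: eq_bigr => l _.
by rewrite mxE mulrCA.
Qed.

Lemma dotz0 (m : 'rV[int]_n) : dotz m 0 = 0.
Proof. by rewrite /dotz big1 // => l _; rewrite mxE mulr0. Qed.

Lemma dotzDl (k : int) (m1 m2 x : 'rV[int]_n) :
  dotz (k *: m1 + m2) x = k * dotz m1 x + dotz m2 x.
Proof.
rewrite /dotz big_distrr -big_split /=; apply: eq_bigr => l _.
by rewrite !mxE mulrDl mulrA.
Qed.

Lemma deg_psi (a c : 'I_N -> int) m : relc c ->
  degc a c = \sum_(k < N) c k * psi a m k.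
Proof.
move=> Hc; rewrite /psi.
under [RHS]eq_bigr => k _ do rewrite mulrDr.
by rewrite big_split /= -dotz_sum Hc dotz0 addr0.
Qed.

Lemma degcD (a c1 c2 : 'I_N -> int) :
  degc a (fun k => c1 k + c2 k) = degc a c1 + degc a c2.
Proof. by rewrite /degc -big_split; apply: eq_bigr => k _; rewrite mulrDl. Qed.

Lemma relcD (c1 c2 : 'I_N -> int) : relc c1 -> relc c2 ->
  relc (fun k => c1 k + c2 k).
Proof.
rewrite /relc => H1 H2.
under eq_bigr => k _ do rewrite scalerDl.
by rewrite big_split /= H1 H2 addr0.
Qed.

Lemma relcN (c : 'I_N -> int) : relc c -> relc (fun k => - c k).
Proof.
rewrite /relc => H.
under eq_bigr => k _ do rewrite scaleNr.
by rewrite sumrN H oppr0.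
Qed.

Lemma relcZ (z : int) (c : 'I_N -> int) : relc c -> relc (fun k => z * c k).
Proof.
rewrite /relc => H.
under eq_bigr => k _ do rewrite -scalerA.
by rewrite -scaler_sumr H scaler0.
Qed.

Lemma sum_ind (i : 'I_N) (F : 'I_N -> 'rV[int]_n) :
  \sum_(k < N) (k == i)%:Z *: F k = F i.
Proof.
rewrite (bigD1 i) //= eqxx scale1r big1 ?addr0 // => k /negbTE ->.
by rewrite scale0r.
Qed.

Lemma sum_indP (P : {set 'I_N}) :
  \sum_(k < N) (k \in P)%:Z *: v k = \sum_(k in P) v k.
Proof.
rewrite [RHS]big_mkcond /=; apply: eq_bigr => k _.
by case: (k \in P); rewrite ?scale1r ?scale0r.
Qed.

Definition Rc (i : 'I_N) (d : 'I_N -> int) k := (k == i)%:Z + d k.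

Definition raydata i s d := [/\ s \in Sigma, forall k, 0 <= d k,
   forall k, k \notin s -> d k = 0 & relc (Rc i d)].

Lemma raydata_ex i : exists s d, raydata i s d.
Proof.
have [s [c [sS c0 cs Hx]]] := complete_int (- v i).
exists s, c; split => //.
rewrite /relc /Rc.
under eq_bigr => k _ do rewrite scalerDl.
by rewrite big_split /= sum_ind -Hx subrr.
Qed.

Lemma Rc_ge0 i d : (forall k, 0 <= d k) -> forall k, 0 <= Rc i d k.
Proof. by move=> H k; rewrite /Rc addr_ge0. Qed.

Lemma Rc_i i d : (forall k, 0 <= d k) -> 1 <= Rc i d i.
Proof. by move=> H; rewrite /Rc eqxx lerDl. Qed.


Lemma sum_ge_term (f : 'I_N -> int) q : (forall k, 0 <= f k) ->
  f q <= \sum_(k < N) f k.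
Proof.
move=> H; rewrite (bigD1 q) //= lerDl sumr_ge0 // => k _; exact: H.
Qed.

Lemma nef_m a s : globally_generated v Sigma a -> s \in Sigma ->
  exists m, (forall k, k \in s -> psi a m k = 0) /\ (forall k, 0 <= psi a m k).
Proof.
move=> Ha sS; have [m [H1 H2]] := Ha s sS; exists m; split.
- by move=> k ks; rewrite /psi H1 // subrr.
- move=> k; rewrite /psi; case: (boolP (k \in s)) => ks.
    by rewrite H1 // subrr.
  by rewrite -lerBlDl sub0r H2.
Qed.

Lemma ample_m a s : ample v Sigma a -> s \in Sigma ->
  exists m, [/\ forall k, k \in s -> psi a m k = 0, forall k, 0 <= psi a m k
            & forall k, k \notin s -> 0 < psi a m k].
Proof.
move=> Ha sS; have [m [H1 H2]] := Ha s sS; exists m; split.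
- by move=> k ks; rewrite /psi H1 // subrr.
- move=> k; rewrite /psi; case: (boolP (k \in s)) => ks.
    by rewrite H1 // subrr.
  by rewrite -lerBlDl sub0r ltW // H2.
- by move=> k ks; rewrite /psi -ltrBlDl sub0r H2.
Qed.

Lemma ample_gg a : ample v Sigma a -> globally_generated v Sigma a.
Proof.
move=> Ha s sS; have [m [H1 H2]] := Ha s sS; exists m; split => // k ks.
exact/ltW/H2.
Qed.

Lemma deg_ray a i s d m : raydata i s d -> (forall k, k \in s -> psi a m k = 0) ->
  degc a (Rc i d) = psi a m i.
Proof.
move=> [sS d0 ds Hr] Hm; rewrite (deg_psi a m Hr) /Rc.
under eq_bigr => k _ do rewrite mulrDl.
rewrite big_split /= [X in _ + X]big1 ?addr0; last first.
  move=> k _; case: (boolP (k \in s)) => ks; first by rewrite Hm ?mulr0.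
  by rewrite ds ?mul0r.
rewrite (bigD1 i) //= eqxx mul1r big1 ?addr0 // => k /negbTE ->.
by rewrite mul0r.
Qed.

Lemma Sigma_ne : exists s, s \in Sigma.
Proof.
have [_ _ Hc _] := Hfan; have [s sS _] := Hc 0; by exists s.
Qed.

Lemma deg_nonneg a c : globally_generated v Sigma a -> relc c ->
  (forall k, 0 <= c k) -> 0 <= degc a c.
Proof.
move=> Ha Hc c0; have [s sS] := Sigma_ne.
have [m [_ Hm]] := nef_m Ha sS.
rewrite (deg_psi a m Hc) sumr_ge0 // => k _; exact: mulr_ge0.
Qed.

Lemma Ldeg_degc a P : Ldeg a P = degc a (fun k => (k \in P)%:Z).
Proof.
rewrite /Ldeg /Ldeg_rel /degc /phiD_ray -sumrN; apply: eq_bigr => k _.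
by rewrite mulrN opprK.
Qed.

Lemma relc_ind P : centred v P -> relc (fun k => (k \in P)%:Z).
Proof. by rewrite /relc sum_indP /centred => /eqP. Qed.


Lemma step a i s d : ample v Sigma a -> raydata i s d ->
  (exists P, centred_primitive v Sigma P /\ forall k, Rc i d k = (k \in P)%:Z) \/
  (exists q s' d', raydata q s' d' /\ degc a (Rc q d') < degc a (Rc i d)).
Proof.
move=> Ha [sS d0 ds Hr].
set R := Rc i d.
have R0 : forall k, 0 <= R k := Rc_ge0 i d0.
have Ri : 1 <= R i := Rc_i i d0.
pose C := [set k | R k != 0].
have Cnc : ~~ is_cone Sigma C.
  apply/negP => /existsP [t /andP [tS Ct]].
  have H0 : forall k, k \notin t -> R k = 0.
    move=> k kt; apply/eqP; apply: contraNT kt => Rk.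
    by apply: (subsetP Ct); rewrite inE.
  by have := indep_int tS Hr H0 i; rewrite -/R => Hi; move: Ri; rewrite Hi.
case: (@arg_minnP _ C (fun Q => (Q \subset C) && ~~ is_cone Sigma Q) (fun Q => #|Q|));
  first by rewrite subxx Cnc.
move=> P /andP [PC Pnc] Pmin.
have Pprim : primitive_collection Sigma P.
  rewrite /primitive_collection Pnc /=; apply/forallP => Q; apply/implyP => QP.
  apply: contraT => Qnc.
  have := Pmin Q; rewrite (subset_trans (proper_sub QP) PC) Qnc => /(_ isT).
  by rewrite leqNgt proper_card.
have PR : forall k, k \in P -> 1 <= R k.
  move=> k kP; have := subsetP PC k kP; rewrite inE => Rk.
  have := R0 k; move: Rk; lia.
have iP : i \in P.
  apply/negPn/negP => iP; move: Pnc; apply/negP; rewrite negbK.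
  apply/existsP; exists s; rewrite sS; apply/subsetP => k kP.
  have := PR k kP; rewrite /R /Rc.
  case: (eqVneq k i) => [ki|ki]; first by move: kP; rewrite ki (negbTE iP).
  rewrite add0r => dk; apply: contraLR dk => ks; by rewrite ds.
case: (boolP (centred v P)) => Hcen.
- left; exists P; split; first by rewrite /centred_primitive Pprim.
  have HG : relc (fun k => R k + - (k \in P)%:Z) := relcD Hr (relcN (relc_ind Hcen)).
  have Gs : forall k, k \notin s -> R k + - (k \in P)%:Z = 0.
    move=> k ks; rewrite /R /Rc ds // addr0.
    case: (eqVneq k i) => [->|ki]; first by rewrite iP subrr.
    case: (boolP (k \in P)) => kP; last by rewrite subrr.
    by have := PR k kP; rewrite /R /Rc (negbTE ki) ds.
  move=> k; have := indep_int sS HG Gs k; by move=> H; apply/eqP; rewrite -subr_eq0 H.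
- right.
  have [t [c [tS c0 ct Hx]]] := complete_int (\sum_(k in P) v k).
  have [q cq] : exists q, c q != 0.
    case: (boolP [exists q, c q != 0]) => [/existsP [q] Hq|]; first by exists q.
    rewrite negb_exists => /forallP Hq; move: Hcen; rewrite /centred Hx.
    by rewrite big1 ?eqxx // => k _; have := Hq k; rewrite negbK => /eqP ->; rewrite scale0r.
  have [s' [d' rd']] := raydata_ex q.
  have [s'S _ _ _] := rd'.
  have [mt [mt0 mtp _]] := ample_m Ha s'S.
  have [mu [mu0 mup mus]] := ample_m Ha tS.
  exists q, s', d'; split => //.
  have HQ : relc (fun k => (k \in P)%:Z + - c k).
    by rewrite /relc; under eq_bigr => k _ do rewrite scalerDl scaleNr;
       rewrite big_split /= sumrN sum_indP -Hx subrr.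
  have HE : relc (fun k => R k + - ((k \in P)%:Z + - c k)) := relcD Hr (relcN HQ).
  have -> : degc a R = degc a (fun k => (k \in P)%:Z + - c k) +
                       degc a (fun k => R k + - ((k \in P)%:Z + - c k)).
    by rewrite -degcD; apply: eq_bigr => k _; congr (_ * _); ring.
  rewrite (deg_ray rd' mt0).
  have E0 : forall k, 0 <= R k + - ((k \in P)%:Z + - c k).
    move=> k; have := c0 k; have := R0 k.
    case: (boolP (k \in P)) => kP; last by lia.
    by have := PR k kP; lia.
  have Eq : psi a mt q <= degc a (fun k => R k + - ((k \in P)%:Z + - c k)).
    rewrite (deg_psi a mt HE).
    apply: le_trans (sum_ge_term q _); last by move=> k; apply: mulr_ge0.
    rewrite ler_peMl //; have := E0 q; have := c0 q; move: cq.
    have := PR q; case: (q \in P); have := R0 q; lia.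
  have Qp : 0 < degc a (fun k => (k \in P)%:Z + - c k).
    rewrite (deg_psi a mu HQ).
    have T : forall k, ((k \in P)%:Z + - c k) * psi a mu k = (k \in P)%:Z * psi a mu k.
      move=> k; case: (boolP (k \in t)) => kt; first by rewrite mu0 // !mulr0.
      by rewrite ct // oppr0 addr0.
    under eq_bigr => k _ do rewrite T.
    have [p pP pt] : exists2 p, p \in P & p \notin t.
      case: (boolP [exists p, (p \in P) && (p \notin t)]) => [/existsP [p /andP [] ]|]; first by exists p.
      rewrite negb_exists => /forallP Hp; exfalso; move/negP: Pnc; apply.
      apply/existsP; exists t; rewrite tS; apply/subsetP => k kP.
      by have := Hp k; rewrite kP /= negbK.
    apply: lt_le_trans (sum_ge_term p _); last by move=> k; apply: mulr_ge0.
    by rewrite pP mul1r mus.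
  by rewrite -[X in X < _]add0r ltr_leD.
Qed.

Lemma ample_lemma a (beta : int) : ample v Sigma a ->
  (forall P, centred_primitive v Sigma P -> beta <= Ldeg a P) ->
  forall i s d, raydata i s d ->
  beta <= degc a (Rc i d) /\
  (degc a (Rc i d) <= beta ->
     exists P, centred_primitive v Sigma P /\ forall k, Rc i d k = (k \in P)%:Z).
Proof.
move=> Ha Hb.
suff H : forall K : nat, forall i s d, raydata i s d -> degc a (Rc i d) <= K%:Z ->
  beta <= degc a (Rc i d) /\
  (degc a (Rc i d) <= beta ->
     exists P, centred_primitive v Sigma P /\ forall k, Rc i d k = (k \in P)%:Z).
  move=> i s d rd; apply: (H `|degc a (Rc i d)|%N _ _ _ rd).
  have [_ d0 _ Hr] := rd.
  have := deg_nonneg (ample_gg Ha) Hr (Rc_ge0 i d0); lia.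
elim=> [|K IH] i s d rd HK; case: (step Ha rd).
- move=> [P [HP HR]]; have -> : degc a (Rc i d) = Ldeg a P.
    by rewrite Ldeg_degc; apply: eq_bigr => k _; rewrite HR.
  by split; [exact: Hb | move=> _; exists P].
- move=> [q [s' [d' [rd' Hlt]]]]; exfalso.
  have [_ d0 _ Hr] := rd'.
  have := deg_nonneg (ample_gg Ha) Hr (Rc_ge0 q d0); lia.
- move=> [P [HP HR]]; have -> : degc a (Rc i d) = Ldeg a P.
    by rewrite Ldeg_degc; apply: eq_bigr => k _; rewrite HR.
  by split; [exact: Hb | move=> _; exists P].
- move=> [q [s' [d' [rd' Hlt]]]].
  have [IH1 _] := IH q s' d' rd' ltac:(lia).
  split; first by lia.
  by move=> H; exfalso; lia.
Qed.

Lemma nef_lemma a (beta : int) : projective v Sigma -> globally_generated v Sigma a ->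
  (forall P, centred_primitive v Sigma P -> beta <= Ldeg a P) ->
  forall i s d, raydata i s d -> beta <= degc a (Rc i d).
Proof.
move=> [h Hh] Ha Hb i s d rd.
have [_ d0 _ Hr] := rd.
pose K : int := (`|degc h (Rc i d)|%N.+1)%:Z.
have K0 : 0 <= K by [].
pose a' := fun k => K * a k + h k.
have Ha' : ample v Sigma a'.
  move=> t tS; have [m1 [H11 H12]] := Ha t tS; have [m2 [H21 H22]] := Hh t tS.
  exists (K *: m1 + m2); split => k kt; rewrite dotzDl /a'.
    by rewrite H11 // H21 // mulrN opprD.
  rewrite opprD -mulrN; apply: ler_ltD; last exact: H22.
  by rewrite ler_wpM2l // H12.
have Hb' : forall P, centred_primitive v Sigma P -> K * beta <= Ldeg a' P.
  move=> P HP; rewrite !Ldeg_degc /degc.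
  under eq_bigr => k _ do rewrite mulrDr mulrCA.
  rewrite big_split /= -mulr_sumr.
  have HP' := HP; move/andP: HP' => [_ Hc].
  have := deg_nonneg (ample_gg Hh) (relc_ind Hc) (fun k => le0z_nat _).
  have := Hb P HP; rewrite Ldeg_degc /degc => H1 H2.
  by apply: ler_wpDr => //; rewrite ler_wpM2l.
have [H _] := ample_lemma Ha' Hb' rd.
move: H; rewrite /degc /a'.
under eq_bigr => k _ do rewrite mulrDr mulrCA.
rewrite big_split /= -mulr_sumr -/(degc a (Rc i d)) -/(degc h (Rc i d)) => H.
apply: contraTT H; rewrite -!ltNge => H.
have H1 : K * degc a (Rc i d) + K <= K * beta.
  by rewrite -[X in _ + X]mulr1 -mulrDr ler_wpM2l // -ltzD1 -(addrC 1) ltzD1 ?H //; lia.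
rewrite /K in H1 *; lia.
Qed.

End Fan.

Section Final.
Variables (n r : nat) (v : 'I_(n + r) -> 'rV[int]_n)
  (Sigma : {set {set 'I_(n + r)}}) (b : 'I_n -> 'I_r -> nat).
Hypothesis Hfan : smooth_complete_fan v Sigma.
Hypothesis Hpos : forall j : 'I_r,
     v (rshift n j) + \sum_(i < n) (b i j)%:Z *: v (lshift r i) = 0.

Lemma Pw_l j0 i : posrel_coef b j0 (lshift r i) = (b i j0)%:Z.
Proof.
rewrite /posrel_coef; have := unsplitK (inl i : 'I_n + 'I_r); rewrite /= => ->.
by [].
Qed.

Lemma Pw_r j0 j : posrel_coef b j0 (rshift n j) = (j == j0)%:Z.
Proof.
rewrite /posrel_coef; have := unsplitK (inr j : 'I_n + 'I_r); rewrite /= => ->.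
by [].
Qed.

Lemma Pw_ge0 j0 k : 0 <= posrel_coef b j0 k.
Proof. by rewrite /posrel_coef; case: split => x. Qed.

Lemma Pw_rel j0 : relc v (posrel_coef b j0).
Proof.
rewrite /relc big_split_ord /= addrC -[RHS](Hpos j0); congr (_ + _).
  rewrite (bigD1 j0) //= Pw_r eqxx scale1r big1 ?addr0 // => j /negbTE Hj.
  by rewrite Pw_r Hj scale0r.
by apply: eq_bigr => i _; rewrite Pw_l.
Qed.

Lemma Pw_deg a j0 : degc a (posrel_coef b j0) =
  a (rshift n j0) + \sum_(i < n) a (lshift r i) * (b i j0)%:Z.
Proof.
rewrite /degc big_split_ord /= addrC; congr (_ + _).
  rewrite (bigD1 j0) //= Pw_r eqxx mul1r big1 ?addr0 // => j /negbTE Hj.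
  by rewrite Pw_r Hj mul0r.
by apply: eq_bigr => i _; rewrite Pw_l mulrC.
Qed.

Lemma Ldeg_rel_degc (a c : 'I_(n + r) -> int) : Ldeg_rel a c = degc a c.
Proof.
rewrite /Ldeg_rel /degc /phiD_ray -sumrN; apply: eq_bigr => k _.
by rewrite mulrN opprK.
Qed.

Definition Fc i0 j0 d k :=
  posrel_coef b j0 k + - ((b i0 j0)%:Z * Rc (lshift r i0) d k).

Lemma decomp a i0 j0 s d m : raydata v Sigma (lshift r i0) s d ->
  (forall k, k \in s -> psi v a m k = 0) -> (forall k, 0 <= psi v a m k) ->
  [/\ degc a (posrel_coef b j0) =
       (b i0 j0)%:Z * degc a (Rc (lshift r i0) d) + degc a (Fc i0 j0 d),
     0 <= degc a (Fc i0 j0 d) &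
     ((forall k, k \notin s -> 0 < psi v a m k) -> Fc i0 j0 d (rshift n j0) != 0 ->
       0 < degc a (Fc i0 j0 d))].
Proof.
move=> rd m0 mp; have [sS d0 ds Hr] := rd.
have HF : relc v (Fc i0 j0 d) := relcD (Pw_rel j0) (relcN (relcZ (b i0 j0)%:Z Hr)).
have Fout : forall k, k \notin s -> 0 <= Fc i0 j0 d k.
  move=> k ks; rewrite /Fc /Rc ds // addr0.
  case: (eqVneq k (lshift r i0)) => [->|kn]; first by rewrite Pw_l mulr1 subrr.
  by rewrite mulr0 oppr0 addr0 Pw_ge0.
have Ft : forall k, 0 <= Fc i0 j0 d k * psi v a m k.
  move=> k; case: (boolP (k \in s)) => ks; first by rewrite m0 // mulr0.
  by rewrite mulr_ge0 // Fout.
split.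
- rewrite /degc mulr_sumr -big_split /=; apply: eq_bigr => k _; rewrite /Fc; ring.
- by rewrite (deg_psi a m HF) sumr_ge0.
- move=> mpos Fn; rewrite (deg_psi a m HF).
  case: (boolP [exists k, (k \notin s) && (Fc i0 j0 d k != 0)]).
    move=> /existsP [k /andP [ks Fk]].
    apply: lt_le_trans (sum_ge_term k Ft).
    rewrite mulr_gt0 ?mpos // lt_neqAle eq_sym Fk Fout //.
  rewrite negb_exists => /forallP Hk.
  have Fs : forall k, k \notin s -> Fc i0 j0 d k = 0.
    by move=> k ks; have := Hk k; rewrite ks /= negbK => /eqP.
  by move: Fn; rewrite (indep_int Hfan sS HF Fs) eqxx.
Qed.

Lemma Fc_r i0 j0 d :
  Fc i0 j0 d (rshift n j0) = 1 - (b i0 j0)%:Z * d (rshift n j0).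
Proof. by rewrite /Fc /Rc Pw_r eqxx eq_rlshift add0r. Qed.

End Final.

Unset Implicit Arguments.

Theorem proposition6p6 (n r : nat) (v : 'I_(n + r) -> 'rV[int]_n)
  (Sigma : {set {set 'I_(n + r)}}) (b : 'I_n -> 'I_r -> nat)
  (a : 'I_(n + r) -> int) (beta : int) :
  smooth_complete_fan v Sigma ->
  projective v Sigma ->
  (* sigma_0 with rays rho_1, ..., rho_n *)
  [set i : 'I_(n + r) | (i < n)%N] \in Sigma ->
  (* positive relations P_{n+j} *)
  (forall j : 'I_r,
     v (rshift n j) + \sum_(i < n) (b i j)%:Z *: v (lshift r i) = 0) ->
  globally_generated v Sigma a ->
  (* beta = minimal L-degree of centred primitive relations *)
  (exists P, centred_primitive v Sigma P /\ Ldeg a P = beta) ->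
  (forall P, centred_primitive v Sigma P -> beta <= Ldeg a P) ->
  [/\ forall (i0 : 'I_n) (j0 : 'I_r),
        Ldeg_rel a (posrel_coef b j0)
          = a (rshift n j0) + \sum_(i < n) a (lshift r i) * (b i j0)%:Z /\
        (b i0 j0)%:Z * beta
          <= a (rshift n j0) + \sum_(i < n) a (lshift r i) * (b i j0)%:Z,
      ample v Sigma a -> forall i0 : 'I_n,
        (forall P, centred_primitive v Sigma P -> Ldeg a P = beta ->
                   lshift r i0 \notin P) ->
        forall j0 : 'I_r,
          (b i0 j0)%:Z * beta
            < a (rshift n j0) + \sum_(i < n) a (lshift r i) * (b i j0)%:Z
    & ample v Sigma a -> forall j0 : 'I_r,
        (forall P, centred_primitive v Sigma P -> Ldeg a P = beta ->
                   rshift n j0 \notin P) ->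
        forall i0 : 'I_n,
          (b i0 j0)%:Z * beta
            < a (rshift n j0) + \sum_(i < n) a (lshift r i) * (b i j0)%:Z].
Proof.
move=> Hfan Hproj _ Hpos Hgg _ Hbeta; split.
- move=> i0 j0; split; first by rewrite Ldeg_rel_degc Pw_deg.
  have [s [d rd]] := raydata_ex Hfan (lshift r i0).
  have [sS _ _ _] := rd.
  have [m [m0 mp]] := nef_m Hgg sS.
  have [E1 E2 _] := decomp Hfan Hpos j0 rd m0 mp.
  rewrite -Pw_deg E1.
  have := nef_lemma Hfan Hproj Hgg Hbeta rd => H.
  have : (b i0 j0)%:Z * beta <= (b i0 j0)%:Z * degc a (Rc (lshift r i0) d).
    by rewrite ler_wpM2l.
  lia.
- move=> Ha i0 Hi0 j0.
  have [s [d rd]] := raydata_ex Hfan (lshift r i0).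
  have [sS d0 _ _] := rd.
  have [m [m0 mp mpos]] := ample_m Ha sS.
  have [E1 E2 E3] := decomp Hfan Hpos j0 rd m0 mp.
  have [L1 L2] := ample_lemma Hfan Ha Hbeta rd.
  have DRgt : beta < degc a (Rc (lshift r i0) d).
    rewrite lt_neqAle L1 andbT; apply/eqP => Heq.
    have [P [HP HR]] := L2 ltac:(by rewrite -Heq).
    have := Hi0 P HP; rewrite Ldeg_degc.
    have -> : degc a (fun k => (k \in P)%:Z) = beta.
      by rewrite Heq; apply: eq_bigr => k _; rewrite HR.
    move=> /(_ erefl); have := Rc_i (lshift r i0) d0; rewrite HR.
    by case: (_ \in P).
  rewrite -Pw_deg E1.
  case: (eqVneq (b i0 j0) 0%N) => b0.
    have := E3 mpos; rewrite Fc_r b0 mul0r subr0 => /(_ isT).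
    by rewrite !mul0r add0r.
  have : (b i0 j0)%:Z * beta < (b i0 j0)%:Z * degc a (Rc (lshift r i0) d).
    by rewrite ltr_pM2l // ltz_nat lt0n.
  lia.
- move=> Ha j0 Hj0 i0.
  have [s [d rd]] := raydata_ex Hfan (lshift r i0).
  have [sS d0 _ _] := rd.
  have [m [m0 mp mpos]] := ample_m Ha sS.
  have [E1 E2 E3] := decomp Hfan Hpos j0 rd m0 mp.
  have [L1 L2] := ample_lemma Hfan Ha Hbeta rd.
  rewrite -Pw_deg E1.
  case: (leP (degc a (Rc (lshift r i0) d)) beta) => Hle.
    have [P [HP HR]] := L2 Hle.
    have Heq : degc a (Rc (lshift r i0) d) = beta by apply/eqP; rewrite eq_le Hle L1.
    have Hn := Hj0 P HP.
    have : Ldeg a P = beta.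
      by rewrite Ldeg_degc -Heq; apply: eq_bigr => k _; rewrite HR.
    move=> /Hn => Hn'.
    have dr : d (rshift n j0) = 0.
      have := HR (rshift n j0); rewrite (negbTE Hn') /Rc eq_rlshift add0r.
      by [].
    have := E3 mpos; rewrite Fc_r dr mulr0 subr0 => /(_ isT).
    rewrite Heq; lia.
  case: (eqVneq (b i0 j0) 0%N) => b0.
    have := E3 mpos; rewrite Fc_r b0 mul0r subr0 => /(_ isT).
    by rewrite !mul0r add0r.
  have : (b i0 j0)%:Z * beta < (b i0 j0)%:Z * degc a (Rc (lshift r i0) d).
    by rewrite ltr_pM2l // ltz_nat lt0n.
  lia.
Qed.
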